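(* For $0<\mu<1$ and $x\in\mathbb T^2$ let $K^+(x)=\{v=(v_1,v_2)\in\mathbb R^2:|v_2|<\mu|v_1|\}$ and $K^-(x)=\{v=(v_1,v_2):|v_1|<\mu|v_2|\}$ (tangent vectors written in the coordinates given by the eigendirections of $A$). There exists $0<\mu_0<1$ such that for all $\mu_0<\mu<1$ and all $x\in\mathbb T^2$, $$DG\,K^+(x)\subseteq K^+(G(x)),\qquad (DG)^{-1}K^-(G(x))\subseteq K^-(x).$$
   Context: Let $A=\begin{pmatrix}2&1\\1&1\end{pmatrix}$ on $\mathbb T^2$, $\lambda>1$ its largest eigenvalue, $(s_1,s_2)$ eigen-coordinates ($s_1$ expanding, $s_2$ contracting). Fix $0<\alpha<1$, $0<r_0<1$ and $\psi:[0,1]\to[0,1]$, $C^\infty$ except at $0$, with $\psi=1$ on $[r_0,1]$, $\psi'>0$ and decreasing on $(0,r_0)$, and $\psi(u)=(u/r_0)^\alpha$ for $0\le u\le r_0/2$. Let $D_r=\{s_1^2+s_2^2\le r\}$ (with $D_{r_0}\subset\mathrm{Int}\,A(D_{r_1})\cap\mathrm{Int}\,A^{-1}(D_{r_1})$, $r_1=2r_0\log\lambda$). $G$ is the homeomorphism of $\mathbb T^2$ equal to $A$ outside $D_{r_0}$ and, on $D_{r_0}$, to the time-one map of the flow $\dot s_1=s_1\psi(s_1^2+s_2^2)\log\lambda$, $\dot s_2=-s_2\psi(s_1^2+s_2^2)\log\lambda$. *)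

(* Defs.v *)
From Stdlib Require Import Reals.
From Coquelicot Require Import Coquelicot.
Open Scope R_scope.

(** Largest eigenvalue of A = [[2,1],[1,1]]. *)
Definition lam : R := (3 + sqrt 5) / 2.

(** Eigen-coordinates (s1,s2) of a point/vector x = (x1,x2) of R^2, w.r.t. the
    orthonormal eigenbasis e1 = (1, lam-2)/N (expanding, eigenvalue lam),
    e2 = (-(lam-2), 1)/N (contracting, eigenvalue 1/lam). *)
Definition eigN : R := sqrt (1 + (lam - 2) ^ 2).
Definition eig (x : R * R) : R * R :=
  ((fst x + (lam - 2) * snd x) / eigN, (- (lam - 2) * fst x + snd x) / eigN).

Definition latt (m n : Z) : R * R := eig (IZR m, IZR n).

(** The linear map A in eigen-coordinates: diag(lam, 1/lam). *)
Definition Aeig (s : R * R) : R * R := (lam * fst s, snd s / lam).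

Definition in_disk (r : R) (m n : Z) (p : R * R) : Prop :=
  (fst p - fst (latt m n)) ^ 2 + (snd p - snd (latt m n)) ^ 2 <= r.

(** The vector field  s1' = s1 psi(s1^2+s2^2) log lam,
                       s2' = - s2 psi(s1^2+s2^2) log lam
    (psi is only given on [0,1]; it is extended by its value 1 beyond 1). *)
Definition vfield (psi : R -> R) (s : R * R) : R * R :=
  let c := psi (Rmin (fst s ^ 2 + snd s ^ 2) 1) * ln lam in
  (fst s * c, - (snd s * c)).

Definition psi_ok (alpha r0 : R) (psi : R -> R) : Prop :=
  (forall u, 0 <= u <= 1 -> 0 <= psi u <= 1) /\
  (forall k u, 0 < u < 1 -> ex_derive_n psi k u) /\
  (forall u, r0 <= u <= 1 -> psi u = 1) /\
  (forall u, 0 < u < r0 -> 0 < Derive psi u) /\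
  (forall u w, 0 < u -> u <= w -> w < r0 -> Derive psi w <= Derive psi u) /\
  psi 0 = 0 /\
  (forall u, 0 < u <= r0 / 2 -> psi u = Rpower (u / r0) alpha).

Definition is_flow (psi : R -> R) (phi : R -> R * R -> R * R) : Prop :=
  (forall p, phi 0 p = p) /\
  (forall t p, is_derive (fun t => phi t p) t (vfield psi (phi t p))).

(** G (lifted to R^2, in eigen-coordinates): time-one map of the flow on the
    disks D_{r0} around the lattice points, and A elsewhere. *)
Definition is_G (r0 : R) (phi : R -> R * R -> R * R) (G : R * R -> R * R) : Prop :=
  (forall m n p, in_disk r0 m n p ->
     let q := (fst p - fst (latt m n), snd p - snd (latt m n)) in
     G p = (fst (Aeig (latt m n)) + fst (phi 1 q),
            snd (Aeig (latt m n)) + snd (phi 1 q))) /\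
  (forall p, (forall m n, ~ in_disk r0 m n p) -> G p = Aeig p).

Definition Kplus (mu : R) (v : R * R) : Prop := Rabs (snd v) < mu * Rabs (fst v).
Definition Kminus (mu : R) (v : R * R) : Prop := Rabs (fst v) < mu * Rabs (snd v).

(* Main.v *)
Require Import Defs.
From Stdlib Require Import Reals Lra Psatz ZArith Classical.
From Coquelicot Require Import Coquelicot.
Open Scope R_scope.

Lemma psd_gen al be ga x y : 0 <= al -> 0 <= ga -> 0 <= al*ga - be^2 ->
  0 <= al*x^2 + 2*be*x*y + ga*y^2.
Proof.
  intros H1 H2 H3.
  destruct (Req_dec al 0) as [H0|H0].
  - subst. assert (be = 0) by nra. subst. nra.
  - assert (al*(al*x^2 + 2*be*x*y + ga*y^2) = (al*x+be*y)^2 + (al*ga-be^2)*y^2) by ring.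
    assert (0 <= (al*x+be*y)^2) by apply pow2_ge_0.
    assert (0 <= y^2) by apply pow2_ge_0.
    assert (0 <= al*(al*x^2 + 2*be*x*y + ga*y^2)) by nra.
    assert (al > 0) by lra.
    apply (Rmult_le_reg_l al); lra.
Qed.
Lemma psd k m1 m2 d1 d2 : 1/2 <= k <= 2 ->
  0 <= (m1^2+m2^2)*(d2^2+k^2*d1^2) + 4*(m1*d1+m2*d2)*(d2*m2+k^2*d1*m1).
Proof.
  intros Hk.
  replace ((m1^2+m2^2)*(d2^2+k^2*d1^2) + 4*(m1*d1+m2*d2)*(d2*m2+k^2*d1*m1))
   with ((d2^2+k^2*d1^2 + 4*k^2*d1^2)*m1^2 + 2*(2*(1+k^2)*d1*d2)*m1*m2 + (d2^2+k^2*d1^2 + 4*d2^2)*m2^2) by ring.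
  assert (Hk2 : 0 <= 9*k^2 - (1+k^2)^2).
  { assert (9*k^2 - (1+k^2)^2 = (3*k-1-k^2)*(3*k+1+k^2)) by ring. assert (0 <= 3*k-1-k^2) by nra. nra. }
  assert (0 <= d1^2) by apply pow2_ge_0.
  assert (0 <= d2^2) by apply pow2_ge_0.
  assert (0 <= k^2) by apply pow2_ge_0.
  apply psd_gen.
  - nra.
  - nra.
  - replace ((d2 ^ 2 + k ^ 2 * d1 ^ 2 + 4 * k ^ 2 * d1 ^ 2) *
 (d2 ^ 2 + k ^ 2 * d1 ^ 2 + 4 * d2 ^ 2) - (2 * (1 + k ^ 2) * d1 * d2) ^ 2)
    with (5*(k^2*d1^2 - d2^2)^2 + 4*(d1^2*d2^2)*(9*k^2 - (1+k^2)^2)) by ring.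
    assert (0 <= (k^2*d1^2 - d2^2)^2) by apply pow2_ge_0.
    assert (0 <= d1^2*d2^2) by nra.
    nra.
Qed.
Lemma alg_core k a1 a2 b1 b2 ha hb : 1/2 <= k <= 2 -> 0 <= ha -> ha <= hb ->
  hb*(a1^2+a2^2) <= ha*(b1^2+b2^2) -> a1^2+a2^2 <= b1^2+b2^2 ->
  2*(b2-a2)*(-(hb*b2) + ha*a2) - 2*k^2*(b1-a1)*(hb*b1 - ha*a1) <= 0.
Proof.
  intros Hk Ha Hab Hc Hn.
  set (d1 := b1 - a1). set (d2 := b2 - a2).
  set (m1 := (a1+b1)/2). set (m2 := (a2+b2)/2).
  assert (E : 2*d2*(-(hb*b2) + ha*a2) - 2*k^2*d1*(hb*b1 - ha*a1)
    = -((ha+hb)*(d2^2+k^2*d1^2)) - 2*(hb-ha)*(d2*m2+k^2*d1*m1)) by (unfold d1,d2,m1,m2; field).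
  rewrite E. clear E.
  assert (HW : 0 <= d2^2+k^2*d1^2) by (assert (0 <= d1^2) by apply pow2_ge_0; assert (0<=d2^2) by apply pow2_ge_0; nra).
  destruct (Rle_or_lt 0 (d2*m2+k^2*d1*m1)) as [HT|HT].
  - nra.
  - set (T := d2*m2+k^2*d1*m1) in *. set (W := d2^2+k^2*d1^2) in *.
    set (Nb := b1^2+b2^2) in *. set (Na := a1^2+a2^2) in *.
    assert (HR : m1*d1+m2*d2 = (Nb - Na)/2) by (unfold m1,m2,d1,d2,Na,Nb; field).
    assert (Hm : m1^2+m2^2 <= Nb).
    { assert (m1^2+m2^2 = (Na+Nb)/2 - ((d1^2+d2^2)/4)) by (unfold m1,m2,d1,d2,Na,Nb; field).
      assert (0 <= d1^2) by apply pow2_ge_0; assert (0<=d2^2) by apply pow2_ge_0. lra. }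
    assert (HNa : 0 <= Na) by (unfold Na; assert (0 <= a1^2) by apply pow2_ge_0; assert (0<=a2^2) by apply pow2_ge_0; lra).
    assert (HNb : 0 < Nb).
    { destruct (Rle_or_lt Nb 0) as [H|H]; [|lra]. exfalso.
      assert (b1 = 0 /\ b2 = 0) as [Hb1 Hb2].
      { unfold Nb in H. assert (0 <= b1^2) by apply pow2_ge_0; assert (0<=b2^2) by apply pow2_ge_0.
        split; nra. }
      assert (a1 = 0 /\ a2 = 0) as [Ha1 Ha2].
      { unfold Na, Nb in *. rewrite Hb1, Hb2 in Hn.
        assert (0 <= a1^2) by apply pow2_ge_0; assert (0<=a2^2) by apply pow2_ge_0. split; nra. }
      unfold T, d1, d2 in HT. rewrite Ha1, Ha2, Hb1, Hb2 in HT. lra. }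
    assert (P := psd k m1 m2 d1 d2 Hk). fold T W in P. rewrite HR in P.
    assert (S1 : (hb-ha)*Nb <= hb*(Nb-Na)) by nra.
    assert (S2 : 2*((hb-ha)*Nb)*T >= 2*(hb*(Nb-Na))*T) by nra.
    assert (S3 : Nb*((ha+hb)*W) >= hb*((m1^2+m2^2)*W)).
    { assert (0 <= ha*(Nb*W)) by (apply Rmult_le_pos; [lra| apply Rmult_le_pos; lra]).
      assert (0 <= hb*(W*(Nb - (m1^2+m2^2)))) by (apply Rmult_le_pos; [lra| apply Rmult_le_pos; lra]).
      nra. }
    assert (S4 : 0 <= hb*((m1^2+m2^2)*W + 4*((Nb-Na)/2)*T)) by (apply Rmult_le_pos; lra).
    assert (0 <= Nb*((ha+hb)*W + 2*(hb-ha)*T)) by nra.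
    assert (0 <= (ha+hb)*W + 2*(hb-ha)*T).
    { apply (Rmult_le_reg_l Nb); lra. }
    lra.
Qed.
Lemma alg (h : R -> R) k a1 a2 b1 b2 : 1/2 <= k <= 2 ->
  (forall x, 0 <= x -> 0 <= h x) ->
  (forall x y, 0 <= y <= x -> h y <= h x /\ h x * y <= h y * x) ->
  let ha := h (a1^2+a2^2) in let hb := h (b1^2+b2^2) in
  2*(b2-a2)*(-(hb*b2) - (-(ha*a2))) - 2*k^2*(b1-a1)*(hb*b1 - ha*a1) <= 0.
Proof.
  intros Hk H0 Hm ha hb.
  assert (0 <= a1^2+a2^2) by (assert (0 <= a1^2) by apply pow2_ge_0; assert (0<=a2^2) by apply pow2_ge_0; lra).
  assert (0 <= b1^2+b2^2) by (assert (0 <= b1^2) by apply pow2_ge_0; assert (0<=b2^2) by apply pow2_ge_0; lra).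
  destruct (Rle_or_lt (a1^2+a2^2) (b1^2+b2^2)) as [Hn|Hn].
  - destruct (Hm (b1^2+b2^2) (a1^2+a2^2)) as [X Y]; [lra|].
    replace (-(hb*b2) - (-(ha*a2))) with (-(hb*b2) + ha*a2) by ring.
    apply alg_core; auto. apply H0; lra.
  - destruct (Hm (a1^2+a2^2) (b1^2+b2^2)) as [X Y]; [lra|].
    assert (Z := alg_core k b1 b2 a1 a2 hb ha Hk (H0 _ H1) X Y (Rlt_le _ _ Hn)).
    fold ha hb. 
    replace (2*(b2-a2)*(-(hb*b2) - (-(ha*a2))) - 2*k^2*(b1-a1)*(hb*b1 - ha*a1))
      with (2 * (a2 - b2) * (- (ha * a2) + hb * b2) - 2 * k ^ 2 * (a1 - b1) * (ha * a1 - hb * b1)) by ring.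
    exact Z.
Qed.
Definition PR := prod_NormedModule R_AbsRing R_NormedModule R_NormedModule.
Lemma der_fst (f : R -> R*R) t l : is_derive f t l -> is_derive (fun s => fst (f s)) t (fst l).
Proof.
  intro H. unfold is_derive in *.
  apply (filterdiff_ext_lin (fun s => fst (f s)) (fun y : R => fst (scal (V := PR) y l))).
  apply (filterdiff_comp' (K := R_AbsRing) (U := R_NormedModule) (V := PR)
     f (fun x  => fst x) t (fun y : R => scal y l) (fun x => fst x)).
  exact H. apply filterdiff_linear. apply is_linear_fst.
  intros y. simpl. reflexivity.
Qed.
Lemma der_snd (f : R -> R*R) t l : is_derive f t l -> is_derive (fun s => snd (f s)) t (snd l).
Proof.
  intro H. unfold is_derive in *.
  apply (filterdiff_ext_lin (fun s => snd (f s)) (fun y : R => snd (scal (V := PR) y l))).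
  apply (filterdiff_comp' (K := R_AbsRing) (U := R_NormedModule) (V := PR)
     f (fun x  => snd x) t (fun y : R => scal y l) (fun x => snd x)).
  exact H. apply filterdiff_linear. apply is_linear_snd.
  intros y. simpl. reflexivity.
Qed.

Definition Vk k (x : R*R) := snd x ^ 2 - k^2 * fst x ^ 2.

Lemma vdiff_der (f g : R -> R) t df dg :
  is_derive f t df -> is_derive g t dg ->
  is_derive (fun s => (f s - g s)^2) t (2*(df - dg)*(f t - g t)).
Proof.
  intros Hf Hg.
  assert (H : is_derive (fun s => f s - g s) t (df - dg)).
  { apply (is_derive_minus f g t df dg Hf Hg). }
  assert (H2 := is_derive_pow _ 2 t _ H). simpl in H2.
  eapply is_derive_ext; [|eapply filterdiff_ext_lin; [exact H2|]].
  - intros s. reflexivity.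
  - intros y. simpl. unfold scal; simpl. unfold mult; simpl. ring.
Qed.

Lemma ode_mono (phi : R -> R*R -> R*R) (X : R*R -> R*R) k q q' :
  phi 0 q = q -> phi 0 q' = q' ->
  (forall t p, is_derive (fun t => phi t p) t (X (phi t p))) ->
  (forall t, let a := phi t q in let b := phi t q' in
     2*(snd b - snd a)*(snd (X b) - snd (X a)) - k^2*(2*(fst b - fst a)*(fst (X b) - fst (X a))) <= 0) ->
  Vk k (fst (phi 1 q') - fst (phi 1 q), snd (phi 1 q') - snd (phi 1 q)) <= Vk k (fst q' - fst q, snd q' - snd q).
Proof.
  intros H0 H0' Hd Hneg.
  set (F := fun t => (snd (phi t q') - snd (phi t q))^2 - k^2 * (fst (phi t q') - fst (phi t q))^2).
  destruct (MVT_cor2 F (fun t => let a := phi t q in let b := phi t q' in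
     2*(snd (X b) - snd (X a))*(snd b - snd a) - k^2*(2*(fst (X b) - fst (X a))*(fst b - fst a))) 0 1)
    as [c [Hc1 Hc2]]; [lra| |].
  { intros c Hc. apply is_derive_Reals. unfold F.
    apply (is_derive_minus (fun t => (snd (phi t q') - snd (phi t q))^2) (fun t => k^2 * (fst (phi t q') - fst (phi t q))^2)).
    - apply vdiff_der; apply der_snd; apply Hd.
    - apply is_derive_scal. apply vdiff_der; apply der_fst; apply Hd. }
  assert (Hn := Hneg c). simpl in Hn, Hc1.
  unfold Vk; simpl. unfold F in Hc1. rewrite H0, H0' in Hc1. nra.
Qed.
Section P.
Variables (alpha r0 : R) (psi : R -> R).
Hypothesis Hr0 : 0 < r0 < 1.
Hypothesis Hok : psi_ok alpha r0 psi.

Lemma psi_der u : 0 < u < 1 -> derivable_pt_lim psi u (Derive psi u).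
Proof.
  intros Hu. destruct Hok as [_ [Hd _]].
  specialize (Hd 1%nat u Hu). simpl in Hd.
  apply is_derive_Reals. apply Derive_correct. exact Hd.
Qed.

Lemma psi_b u : 0 <= u <= 1 -> 0 <= psi u <= 1.
Proof. destruct Hok as [H _]. apply H. Qed.
Lemma psi_1 u : r0 <= u <= 1 -> psi u = 1.
Proof. destruct Hok as [_ [_ [H _]]]. apply H. Qed.
Lemma psi_pos u : 0 < u < r0 -> 0 < Derive psi u.
Proof. destruct Hok as [_ [_ [_ [H _]]]]. apply H. Qed.
Lemma psi_dec u w : 0 < u -> u <= w -> w < r0 -> Derive psi w <= Derive psi u.
Proof. destruct Hok as [_ [_ [_ [_ [H _]]]]]. apply H. Qed.
Lemma psi_0 : psi 0 = 0.
Proof. destruct Hok as [_ [_ [_ [_ [_ [H _]]]]]]. apply H. Qed.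

Lemma psi_mono y x : 0 <= y <= x -> x <= 1 -> psi y <= psi x.
Proof.
  intros Hy Hx.
  destruct (Rle_or_lt r0 x) as [Hr|Hr].
  { rewrite (psi_1 x) by lra. apply psi_b; lra. }
  destruct (Req_dec y 0) as [->|Hy0].
  { rewrite psi_0. apply psi_b; lra. }
  destruct (Req_dec y x) as [->|Hyx]; [lra|].
  destruct (MVT_cor2 psi (Derive psi) y x) as [c [Hc1 Hc2]]; [lra| |].
  { intros c Hc. apply psi_der. lra. }
  assert (0 < Derive psi c) by (apply psi_pos; lra). nra.
Qed.

Lemma psi_x u : 0 < u < r0 -> u * Derive psi u <= psi u.
Proof.
  intros Hu.
  assert (Hp := psi_pos u Hu).
  destruct (Rle_or_lt (u * Derive psi u) (psi u)) as [H|H]; [exact H|exfalso].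
  set (e := Rmin (u/2) ((u * Derive psi u - psi u)/(2*Derive psi u))).
  assert (He : 0 < e).
  { unfold e. apply Rmin_pos. lra. apply Rdiv_lt_0_compat; lra. }
  assert (He1 : e <= u/2) by apply Rmin_l.
  assert (He2 : e <= (u * Derive psi u - psi u)/(2*Derive psi u)) by apply Rmin_r.
  destruct (MVT_cor2 psi (Derive psi) e u) as [c [Hc1 Hc2]]; [lra| |].
  { intros c Hc. apply psi_der. lra. }
  assert (Derive psi u <= Derive psi c) by (apply psi_dec; lra).
  assert (0 <= psi e) by (apply psi_b; lra).
  assert (e * Derive psi u <= (u * Derive psi u - psi u)/2).
  { apply (Rmult_le_compat_r (Derive psi u)) in He2; [|lra].
    replace ((u * Derive psi u - psi u) / (2 * Derive psi u) * Derive psi u) with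
      ((u * Derive psi u - psi u)/2) in He2 by (field; lra). lra. }
  nra.
Qed.

Lemma psi_conc y x : 0 <= y <= x -> x <= 1 -> psi x * y <= psi y * x.
Proof.
  intros Hy Hx.
  destruct (Req_dec y 0) as [->|Hy0].
  { rewrite psi_0. assert (0 <= psi x) by (apply psi_b; lra). nra. }
  destruct (Rle_or_lt r0 y) as [Hr|Hr].
  { rewrite (psi_1 x) by lra. rewrite (psi_1 y) by lra. lra. }
  set (x' := Rmin x r0).
  assert (Hx'1 : x' <= x) by apply Rmin_l.
  assert (Hx'2 : x' <= r0) by apply Rmin_r.
  assert (Hx'3 : y <= x') by (unfold x'; apply Rmin_glb; lra).
  assert (Hpx : psi x = psi x').
  { unfold x'. destruct (Rle_or_lt x r0).
    - rewrite Rmin_left; auto.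
    - rewrite Rmin_right by lra. rewrite !psi_1; lra. }
  assert (K : psi x' * y <= psi y * x').
  { destruct (Req_dec y x') as [E|E]. { rewrite <- E. lra. }
    destruct (MVT_cor2 (fun z => psi z * y - psi y * z) (fun z => Derive psi z * y - psi y) y x')
      as [c [Hc1 Hc2]]; [lra| |].
    { intros c Hc. apply is_derive_Reals.
      assert (D := psi_der c ltac:(lra)). apply is_derive_Reals in D.
      auto_derive.
      - exists (Derive psi c). exact D.
      - change (Derive (fun x0 : R => psi x0) c) with (Derive psi c). ring. }
    assert (Derive psi c <= Derive psi y) by (apply psi_dec; lra).
    assert (y * Derive psi y <= psi y) by (apply psi_x; lra).
    assert (Derive psi c * y - psi y <= 0) by nra.
    nra. }
  rewrite Hpx. assert (0 <= psi y) by (apply psi_b; lra).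
  assert (psi y * x' <= psi y * x) by (apply Rmult_le_compat_l; lra). lra.
Qed.
End P.

Lemma lam_gt1 : 1 < lam.
Proof. unfold lam. assert (0 <= sqrt 5) by apply sqrt_pos. lra. Qed.
Lemma ln_lam_pos : 0 < ln lam.
Proof. rewrite <- ln_1. apply ln_increasing; [lra|apply lam_gt1]. Qed.

Definition hh (psi : R -> R) x := psi (Rmin x 1) * ln lam.

Lemma hh_nonneg alpha r0 psi : psi_ok alpha r0 psi -> forall x, 0 <= x -> 0 <= hh psi x.
Proof.
  intros Hok x Hx. unfold hh. apply Rmult_le_pos; [|left; apply ln_lam_pos].
  apply (psi_b alpha r0 psi Hok). split. apply Rmin_glb; lra. apply Rmin_r.
Qed.

Lemma hh_prop alpha r0 psi : 0 < r0 < 1 -> psi_ok alpha r0 psi ->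
  forall x y, 0 <= y <= x -> hh psi y <= hh psi x /\ hh psi x * y <= hh psi y * x.
Proof.
  intros Hr Hok x y Hxy. unfold hh. assert (Hl := ln_lam_pos).
  destruct (Rle_or_lt x 1) as [Hx|Hx].
  - rewrite (Rmin_left x) by lra. rewrite (Rmin_left y) by lra. split.
    + apply Rmult_le_compat_r; [lra|]. apply (psi_mono alpha r0 psi Hr Hok); lra.
    + assert (psi x * y <= psi y * x) by (apply (psi_conc alpha r0 psi Hr Hok); lra). nra.
  - rewrite (Rmin_right x) by lra. destruct (Rle_or_lt y 1) as [Hy|Hy].
    + rewrite (Rmin_left y) by lra. split.
      * apply Rmult_le_compat_r; [lra|]. apply (psi_mono alpha r0 psi Hr Hok); lra.
      * assert (psi 1 * y <= psi y * 1) by (apply (psi_conc alpha r0 psi Hr Hok); lra).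
        assert (0 <= psi y) by (apply (psi_b alpha r0 psi Hok); lra).
        assert (psi 1 * y <= psi y * x) by nra.
        replace (psi 1 * ln lam * y) with ((psi 1 * y) * ln lam) by ring.
        replace (psi y * ln lam * x) with ((psi y * x) * ln lam) by ring.
        apply Rmult_le_compat_r; lra.
    + rewrite (Rmin_right y) by lra. split; [lra|].
      assert (0 <= psi 1) by (apply (psi_b alpha r0 psi Hok); lra).
      apply Rmult_le_compat_l; [|lra]. apply Rmult_le_pos; lra.
Qed.

Lemma ode alpha r0 psi phi k q q' : 0 < r0 < 1 -> psi_ok alpha r0 psi -> is_flow psi phi ->
  1/2 <= k <= 2 ->
  Vk k (fst (phi 1 q') - fst (phi 1 q), snd (phi 1 q') - snd (phi 1 q)) <= Vk k (fst q' - fst q, snd q' - snd q).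
Proof.
  intros Hr Hok [H0 Hd] Hk.
  apply (ode_mono phi (vfield psi)); auto.
  intros t a b.
  assert (A := alg (hh psi) k (fst a) (snd a) (fst b) (snd b) Hk (hh_nonneg alpha r0 psi Hok)
     (hh_prop alpha r0 psi Hr Hok)).
  simpl in A. unfold vfield, hh in *. simpl. nra.
Qed.
Definition pt (p v : R*R) t : R*R := (fst p + t*fst v, snd p + t*snd v).

Lemma diff_dir (G L : R*R -> R*R) p v : filterdiff G (locally p) L ->
  forall eps, 0 < eps -> exists del, 0 < del /\ forall t, 0 < t < del ->
   Rabs (fst (G (pt p v t)) - fst (G p) - t * fst (L v)) <= eps*t*(Rabs (fst v) + Rabs (snd v)) /\
   Rabs (snd (G (pt p v t)) - snd (G p) - t * snd (L v)) <= eps*t*(Rabs (fst v) + Rabs (snd v)).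
Proof.
  intros [Hlin Hdom] eps Heps.
  assert (Hp : is_filter_lim (locally p) p) by (intros P HP; exact HP).
  destruct (Hdom p Hp (mkposreal (eps/2) ltac:(lra))) as [d Hd]. simpl in Hd.
  exists (d / (Rabs (fst v) + Rabs (snd v) + 1)). split.
  { apply Rdiv_lt_0_compat. apply cond_pos. assert (0 <= Rabs (fst v)) by apply Rabs_pos.
    assert (0 <= Rabs (snd v)) by apply Rabs_pos. lra. }
  intros t Ht.
  assert (Hs1 : 0 <= Rabs (fst v)) by apply Rabs_pos.
  assert (Hs2 : 0 <= Rabs (snd v)) by apply Rabs_pos.
  assert (Htd : t * (Rabs (fst v) + Rabs (snd v) + 1) < d).
  { destruct Ht as [Ht1 Ht2]. apply (Rmult_lt_compat_r (Rabs (fst v) + Rabs (snd v) + 1)) in Ht2; [|lra].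
    unfold Rdiv in Ht2. rewrite Rmult_assoc, Rinv_l in Ht2 by lra. lra. }
  specialize (Hd (pt p v t)).
  assert (Hb : ball p d (pt p v t)).
  { split.
    - change (Rabs (fst p + t * fst v - fst p) < d).
      replace (fst p + t * fst v - fst p) with (t * fst v) by ring.
      rewrite Rabs_mult, (Rabs_pos_eq t) by lra. nra.
    - change (Rabs (snd p + t * snd v - snd p) < d).
      replace (snd p + t * snd v - snd p) with (t * snd v) by ring.
      rewrite Rabs_mult, (Rabs_pos_eq t) by lra. nra. }
  specialize (Hd Hb).
  match type of Hd with context [L ?z] => assert (Em : z = scal t v) end.
  { change (minus (pt p v t) p) with ((fst p + t*fst v - fst p, snd p + t*snd v - snd p)).
    change (scal t v) with (t * fst v, t * snd v).
    f_equal; ring. }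
  rewrite Em in Hd. rewrite (linear_scal L Hlin) in Hd.
  assert (Ev : scal t v = (t * fst v, t * snd v)).
  { destruct v; reflexivity. }
  rewrite Ev in Hd.
  match type of Hd with norm ?z <= _ => set (X := z) in Hd end.
  assert (HX1 : fst X = fst (G (pt p v t)) - fst (G p) - t * fst (L v)).
  { unfold X, minus, plus, opp, scal; simpl. unfold minus, plus, opp, scal, mult; simpl. unfold mult; simpl. ring. }
  assert (HX2 : snd X = snd (G (pt p v t)) - snd (G p) - t * snd (L v)).
  { unfold X, minus, plus, opp, scal; simpl. unfold minus, plus, opp, scal, mult; simpl. unfold mult; simpl. ring. }
  rewrite <- HX1, <- HX2. clearbody X.
  rewrite (surjective_pairing X) in Hd.
  assert (N1 := norm_prod (K := R_AbsRing) (U := R_NormedModule) (V := R_NormedModule) (fst X) (snd X)).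
  assert (N2 := norm_prod (K := R_AbsRing) (U := R_NormedModule) (V := R_NormedModule) (t * fst v) (t * snd v)).
  simpl in N1, N2, Hd. unfold norm in N1, N2, Hd; simpl in N1, N2, Hd. unfold abs in N1, N2; simpl in N1, N2.
  assert (S2 : sqrt 2 <= 2).
  { rewrite <- (sqrt_square 2) at 2 by lra. apply sqrt_le_1_alt. lra. }
  assert (M1 : Rmax (Rabs (t * fst v)) (Rabs (t * snd v)) <= t * (Rabs (fst v) + Rabs (snd v))).
  { rewrite !Rabs_mult, Rabs_pos_eq by lra. apply Rmax_lub; nra. }
  assert (0 <= Rmax (Rabs (t * fst v)) (Rabs (t * snd v))) by (eapply Rle_trans; [apply Rabs_pos|apply Rmax_l]).
  assert (Q : sqrt 2 * Rmax (Rabs (t * fst v)) (Rabs (t * snd v)) <= 2 * (t * (Rabs (fst v) + Rabs (snd v)))).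
  { assert (0 <= sqrt 2) by apply sqrt_pos. nra. }
  assert (Q2 : prod_norm (fst X, snd X) <= eps * t * (Rabs (fst v) + Rabs (snd v))).
  { eapply Rle_trans; [exact Hd|].
    replace (eps * t * (Rabs (fst v) + Rabs (snd v))) with (eps/2 * (2 * (t * (Rabs (fst v) + Rabs (snd v))))) by field.
    apply Rmult_le_compat_l; [lra|]. eapply Rle_trans; [apply N2|]. exact Q. }
  assert (Rmax (Rabs (fst X)) (Rabs (snd X)) <= prod_norm (fst X, snd X)) by (eapply Rle_trans; [apply N1|]; apply Rle_refl).
  assert (Rabs (fst X) <= Rmax (Rabs (fst X)) (Rabs (snd X))) by apply Rmax_l.
  assert (Rabs (snd X) <= Rmax (Rabs (fst X)) (Rabs (snd X))) by apply Rmax_r.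
  split; lra.
Qed.
Lemma lim_V k l1 l2 V s (e1 e2 : R -> R) :
 (forall eps, 0 < eps -> exists del, 0 < del /\ forall t, 0 < t < del ->
    Rabs (e1 t - t*l1) <= eps*t*s /\ Rabs (e2 t - t*l2) <= eps*t*s) ->
 0 <= s ->
 (exists del, 0 < del /\ forall t, 0 < t < del -> e2 t ^2 - k^2 * e1 t ^2 <= t^2 * V) ->
 l2^2 - k^2*l1^2 <= V.
Proof.
  intros Hd Hs [d0 [Hd0 HV]].
  destruct (Rle_or_lt (l2^2 - k^2*l1^2) V) as [H|H]; [exact H|exfalso].
  set (g := l2^2 - k^2*l1^2 - V).
  assert (Hg : 0 < g) by (unfold g; lra).
  assert (Hk : 0 <= k^2) by apply pow2_ge_0.
  assert (HA1 : 0 <= Rabs l1) by apply Rabs_pos. assert (HA2 : 0 <= Rabs l2) by apply Rabs_pos.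
  set (C := 2*Rabs l2 + 1 + k^2*(2*Rabs l1 + 1)).
  assert (HC : 0 < C) by (unfold C; nra).
  set (e := Rmin 1 (g/(2*C))).
  assert (He : 0 < e) by (unfold e; apply Rmin_pos; [lra|apply Rdiv_lt_0_compat; lra]).
  assert (He1 : e <= 1) by apply Rmin_l.
  assert (He2 : e <= g/(2*C)) by apply Rmin_r.
  assert (HeC : e * C < g).
  { apply (Rmult_le_compat_r C) in He2; [|lra].
    replace (g / (2*C) * C) with (g/2) in He2 by (field; lra). lra. }
  destruct (Hd (e/(s+1))) as [d1 [Hd1 Ht]]. { apply Rdiv_lt_0_compat; lra. }
  set (t := Rmin d0 d1 / 2).
  assert (Htp : 0 < t) by (unfold t; assert (0 < Rmin d0 d1) by (apply Rmin_pos; lra); lra).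
  assert (Ht0 : t < d0) by (unfold t; assert (Rmin d0 d1 <= d0) by apply Rmin_l; lra).
  assert (Ht1 : t < d1) by (unfold t; assert (Rmin d0 d1 <= d1) by apply Rmin_r; lra).
  destruct (Ht t (conj Htp Ht1)) as [B1 B2].
  specialize (HV t (conj Htp Ht0)).
  assert (Hes : e/(s+1)*t*s <= e*t).
  { replace (e/(s+1)*t*s) with (e*t*(s/(s+1))) by (field; lra).
    assert (s/(s+1) <= 1). { apply (Rmult_le_reg_r (s+1)); [lra|]. unfold Rdiv. rewrite Rmult_assoc, Rinv_l by lra. lra. }
    assert (0 <= e*t) by nra. nra. }
  set (x1 := e1 t - t*l1) in *. set (x2 := e2 t - t*l2) in *.
  assert (Ex1 : e1 t = t*l1 + x1) by (unfold x1; ring).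
  assert (Ex2 : e2 t = t*l2 + x2) by (unfold x2; ring).
  rewrite Ex1, Ex2 in HV.
  assert (A1 : Rabs x1 <= e*t) by lra. assert (A2 : Rabs x2 <= e*t) by lra.
  assert (P1 : -(l2*x2) <= Rabs l2 * (e*t)).
  { assert (-(l2*x2) <= Rabs (l2*x2)) by (rewrite <- Rabs_Ropp; apply Rle_abs).
    rewrite Rabs_mult in H0. assert (Rabs l2 * Rabs x2 <= Rabs l2 * (e*t)) by (apply Rmult_le_compat_l; lra). lra. }
  assert (P2 : l1*x1 <= Rabs l1 * (e*t)).
  { assert (l1*x1 <= Rabs (l1*x1)) by apply Rle_abs.
    rewrite Rabs_mult in H0. assert (Rabs l1 * Rabs x1 <= Rabs l1 * (e*t)) by (apply Rmult_le_compat_l; lra). lra. }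
  assert (P3 : x1^2 <= (e*t)^2).
  { rewrite <- pow2_abs.
    assert (0 <= Rabs x1) by apply Rabs_pos. nra. }
  assert (P4 : 0 <= x2^2) by apply pow2_ge_0.
  assert (Het : e*t <= t) by nra.
  assert (0 <= e*t) by nra.
  assert (Key : t^2*(l2^2 - k^2*l1^2) - ((t*l2+x2)^2 - k^2*(t*l1+x1)^2) <= t^2*(e*C)).
  { replace (t^2*(l2^2 - k^2*l1^2) - ((t*l2+x2)^2 - k^2*(t*l1+x1)^2))
      with (2*t*(-(l2*x2)) - x2^2 + k^2*(2*t*(l1*x1) + x1^2)) by ring.
    unfold C.
    assert (2*t*(-(l2*x2)) <= 2*t*(Rabs l2*(e*t))) by (apply Rmult_le_compat_l; lra).
    assert (k^2*(2*t*(l1*x1) + x1^2) <= k^2*(2*t*(Rabs l1*(e*t)) + (e*t)*t)).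
    { apply Rmult_le_compat_l; [lra|]. assert (2*t*(l1*x1) <= 2*t*(Rabs l1*(e*t))) by (apply Rmult_le_compat_l; lra).
      assert ((e*t)^2 <= (e*t)*t) by nra. lra. }
    nra. }
  assert (t^2*(e*C) < t^2*g) by (apply Rmult_lt_compat_l; [nra|lra]).
  unfold g in *. nra.
Qed.

Lemma lin_lim w a l s (e : R -> R) : 0 <= s ->
  (forall eps, 0 < eps -> exists del, 0 < del /\ forall t, 0 < t < del -> Rabs (e t - t*l) <= eps*t*s) ->
  (exists del, 0 < del /\ forall t, 0 < t < del -> e t = w + t*a) -> a = l.
Proof.
  intros Hs Hd [d0 [Hd0 He]].
  assert (Hw : w = 0).
  { destruct (Req_dec w 0) as [H|H]; [exact H|exfalso].
    destruct (Hd 1 ltac:(lra)) as [d1 [Hd1 Ht]].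
    assert (Hw : 0 < Rabs w) by (apply Rabs_pos_lt; exact H).
    assert (Hal : 0 <= Rabs (a - l)) by apply Rabs_pos.
    set (t := Rmin (Rmin d0 d1 / 2) (Rabs w / (2*(s + Rabs (a-l) + 1)))).
    assert (Hm : 0 < Rmin d0 d1) by (apply Rmin_pos; lra).
    assert (Htp : 0 < t) by (unfold t; apply Rmin_pos; [lra|apply Rdiv_lt_0_compat; lra]).
    assert (Ht1 : t <= Rmin d0 d1 / 2) by apply Rmin_l.
    assert (Ht2 : t <= Rabs w / (2*(s + Rabs (a-l) + 1))) by apply Rmin_r.
    assert (Rmin d0 d1 <= d0) by apply Rmin_l. assert (Rmin d0 d1 <= d1) by apply Rmin_r.
    specialize (Ht t ltac:(lra)). rewrite (He t ltac:(lra)) in Ht.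
    replace (w + t*a - t*l) with (w + t*(a-l)) in Ht by ring.
    assert (T0 : Rabs w <= Rabs (w + t*(a-l)) + Rabs (t*(a-l))).
    { replace w with ((w + t*(a-l)) + - (t*(a-l))) at 1 by ring.
      eapply Rle_trans; [apply Rabs_triang|]. rewrite Rabs_Ropp. lra. }
    rewrite Rabs_mult, (Rabs_pos_eq t) in T0 by lra.
    assert (t*(2*(s + Rabs (a-l) + 1)) <= Rabs w).
    { apply (Rmult_le_compat_r (2*(s + Rabs (a-l) + 1))) in Ht2; [|lra].
      replace (Rabs w / (2 * (s + Rabs (a - l) + 1)) * (2 * (s + Rabs (a - l) + 1))) with (Rabs w) in Ht2 by (field; lra).
      lra. }
    nra. }
  subst w.
  destruct (Req_dec a l) as [H|H]; [exact H|exfalso].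
  assert (Hal : 0 < Rabs (a - l)) by (apply Rabs_pos_lt; lra).
  destruct (Hd (Rabs (a-l)/(2*(s+1)))) as [d1 [Hd1 Ht]]. { apply Rdiv_lt_0_compat; lra. }
  set (t := Rmin d0 d1 / 2).
  assert (Hm : 0 < Rmin d0 d1) by (apply Rmin_pos; lra).
  assert (Rmin d0 d1 <= d0) by apply Rmin_l. assert (Rmin d0 d1 <= d1) by apply Rmin_r.
  assert (Htp : 0 < t) by (unfold t; lra).
  specialize (Ht t ltac:(unfold t; lra)). rewrite (He t ltac:(unfold t; lra)) in Ht.
  replace (0 + t*a - t*l) with (t*(a-l)) in Ht by ring.
  rewrite Rabs_mult, (Rabs_pos_eq t) in Ht by lra.
  assert (Rabs (a-l) <= Rabs (a-l)/(2*(s+1))*s).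
  { apply (Rmult_le_reg_l t); [lra|]. lra. }
  assert (Rabs (a-l)/(2*(s+1))*s < Rabs (a-l)).
  { replace (Rabs (a-l)/(2*(s+1))*s) with (Rabs (a-l) * (s/(2*(s+1)))) by (field; lra).
    assert (s/(2*(s+1)) < 1).
    { apply (Rmult_lt_reg_r (2*(s+1))); [lra|]. unfold Rdiv. rewrite Rmult_assoc, Rinv_l by lra. lra. }
    nra. }
  lra.
Qed.
Lemma eigN_pos : 0 < eigN.
Proof. unfold eigN. apply sqrt_lt_R0. assert (0 <= (lam-2)^2) by apply pow2_ge_0. lra. Qed.
Lemma eigN_sq : eigN^2 = 1 + (lam-2)^2.
Proof. unfold eigN. rewrite <- Rsqr_pow2. rewrite Rsqr_sqrt. ring. assert (0 <= (lam-2)^2) by apply pow2_ge_0. lra. Qed.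

Lemma latt_dist m n m' n' :
  (fst (latt m n) - fst (latt m' n'))^2 + (snd (latt m n) - snd (latt m' n'))^2
  = IZR ((m-m')*(m-m') + (n-n')*(n-n')).
Proof.
  rewrite plus_IZR, !mult_IZR, !minus_IZR.
  unfold latt, eig; simpl.
  assert (HN := eigN_pos). assert (HN2 := eigN_sq).
  set (a := lam - 2) in *. set (N := eigN) in *.
  transitivity ((1 + a^2)*((IZR m - IZR m')^2 + (IZR n - IZR n')^2) / N^2).
  - field. lra.
  - rewrite <- HN2. field. lra.
Qed.

Lemma tri a1 a2 b1 b2 : sqrt ((a1+b1)^2+(a2+b2)^2) <= sqrt (a1^2+a2^2) + sqrt (b1^2+b2^2).
Proof.
  assert (HA : 0 <= a1^2+a2^2) by (assert (0<=a1^2) by apply pow2_ge_0; assert (0<=a2^2) by apply pow2_ge_0; lra).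
  assert (HB : 0 <= b1^2+b2^2) by (assert (0<=b1^2) by apply pow2_ge_0; assert (0<=b2^2) by apply pow2_ge_0; lra).
  set (sA := sqrt (a1^2+a2^2)). set (sB := sqrt (b1^2+b2^2)).
  assert (EA : sA*sA = a1^2+a2^2) by (apply sqrt_sqrt; lra).
  assert (EB : sB*sB = b1^2+b2^2) by (apply sqrt_sqrt; lra).
  assert (PA : 0 <= sA) by apply sqrt_pos. assert (PB : 0 <= sB) by apply sqrt_pos.
  assert (CS : a1*b1 + a2*b2 <= sA*sB).
  { destruct (Rle_or_lt (a1*b1+a2*b2) 0) as [H|H]. { nra. }
    assert ((a1*b1+a2*b2)^2 <= (sA*sB)^2).
    { replace ((sA*sB)^2) with ((sA*sA)*(sB*sB)) by ring. rewrite EA, EB.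
      assert (0 <= (a1*b2 - a2*b1)^2) by apply pow2_ge_0. nra. }
    assert (0 <= sA*sB) by nra. nra. }
  rewrite <- (sqrt_square (sA + sB)) by lra.
  apply sqrt_le_1_alt. nra.
Qed.

Lemma dist_sqrt_le x1 x2 r : x1^2 + x2^2 <= r -> sqrt (x1^2+x2^2) <= sqrt r.
Proof. intros H. apply sqrt_le_1_alt. exact H. Qed.

Lemma half_sq a b r : a^2+b^2 <= 4*r -> (a/2)^2+(b/2)^2 <= r.
Proof. intros H. replace ((a/2)^2+(b/2)^2) with ((a^2+b^2)/4) by field. lra. Qed.
Lemma half_sq' a b r : a^2+b^2 <= 4*r -> (-a/2)^2+(-b/2)^2 <= r.
Proof. intros H. replace ((-a/2)^2+(-b/2)^2) with ((a^2+b^2)/4) by field. lra. Qed.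


Lemma disk_convex r c1 c2 p1 p2 v1 v2 t0 t : (p1-c1)^2+(p2-c2)^2 <= r ->
  (p1+t0*v1-c1)^2+(p2+t0*v2-c2)^2 <= r -> 0 < t0 -> 0 <= t <= t0 ->
  (p1+t*v1-c1)^2+(p2+t*v2-c2)^2 <= r.
Proof.
  intros H0 H1 Ht0 Ht.
  assert (E : t0*((p1+t*v1-c1)^2+(p2+t*v2-c2)^2) = (t0-t)*((p1-c1)^2+(p2-c2)^2) + t*((p1+t0*v1-c1)^2+(p2+t0*v2-c2)^2)
     + t*t0*(v1^2+v2^2)*(t-t0)) by ring.
  assert (0 <= v1^2+v2^2) by (assert (0 <= v1^2) by apply pow2_ge_0; assert (0 <= v2^2) by apply pow2_ge_0; lra).
  assert (t*t0*(v1^2+v2^2)*(t-t0) <= 0).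
  { assert (0 <= t*t0*(v1^2+v2^2)) by (apply Rmult_le_pos; [apply Rmult_le_pos|]; lra). nra. }
  assert ((t0-t)*((p1-c1)^2+(p2-c2)^2) <= (t0-t)*r) by (apply Rmult_le_compat_l; lra).
  assert (t*((p1+t0*v1-c1)^2+(p2+t0*v2-c2)^2) <= t*r) by (apply Rmult_le_compat_l; lra).
  apply (Rmult_le_reg_l t0); [lra|]. lra.
Qed.

Section Geo.
Variables (r0 : R) (Hr0 : 0 < r0 < 1).
Variable Hdis : forall m1 n1 m2 n2 p, in_disk r0 m1 n1 p -> in_disk r0 m2 n2 p -> m1 = m2 /\ n1 = n2.

Definition SS := IZR (up (4*r0)).
Definition eta := sqrt SS - 2 * sqrt r0.

Lemma SS_gt : 4*r0 < SS.
Proof. unfold SS. destruct (archimed (4*r0)). lra. Qed.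

Lemma eta_pos : 0 < eta.
Proof.
  unfold eta. assert (H := SS_gt).
  assert (sqrt (4*r0) < sqrt SS) by (apply sqrt_lt_1_alt; lra).
  rewrite sqrt_mult_alt in H0 by lra.
  assert (E4 : sqrt 4 = 2) by (replace 4 with (2*2) by ring; apply sqrt_square; lra).
  rewrite E4 in H0. lra.
Qed.

Lemma sep_int m n m' n' : ~ (m = m' /\ n = n') ->
  4*r0 < (fst (latt m n) - fst (latt m' n'))^2 + (snd (latt m n) - snd (latt m' n'))^2.
Proof.
  intros Hne. destruct (Rle_or_lt ((fst (latt m n) - fst (latt m' n'))^2 + (snd (latt m n) - snd (latt m' n'))^2) (4*r0)) as [H|H]; [exfalso|exact H].
  apply Hne. apply (Hdis m n m' n' ((fst (latt m n) + fst (latt m' n'))/2, (snd (latt m n) + snd (latt m' n'))/2)).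
  - unfold in_disk; cbn [fst snd].
    replace ((fst (latt m n) + fst (latt m' n')) / 2 - fst (latt m n)) with (-(fst (latt m n) - fst (latt m' n'))/2) by field.
    replace ((snd (latt m n) + snd (latt m' n')) / 2 - snd (latt m n)) with (-(snd (latt m n) - snd (latt m' n'))/2) by field.
    apply half_sq'; exact H.
  - unfold in_disk; cbn [fst snd].
    replace ((fst (latt m n) + fst (latt m' n')) / 2 - fst (latt m' n')) with ((fst (latt m n) - fst (latt m' n'))/2) by field.
    replace ((snd (latt m n) + snd (latt m' n')) / 2 - snd (latt m' n')) with ((snd (latt m n) - snd (latt m' n'))/2) by field.
    apply half_sq; exact H.
Qed.

Lemma sep_S m n m' n' : ~ (m = m' /\ n = n') ->
  SS <= (fst (latt m n) - fst (latt m' n'))^2 + (snd (latt m n) - snd (latt m' n'))^2.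
Proof.
  intros Hne. assert (H := sep_int m n m' n' Hne). rewrite latt_dist in *.
  set (N := ((m - m') * (m - m') + (n - n') * (n - n'))%Z) in *.
  unfold SS. apply IZR_le.
  destruct (Z_lt_le_dec N (up (4*r0))) as [Hl|Hl]; [exfalso|exact Hl].
  assert (Hl' : (N <= up (4*r0) - 1)%Z) by lia.
  apply IZR_le in Hl'. rewrite minus_IZR in Hl'. destruct (archimed (4*r0)). lra.
Qed.

Lemma sep m n m' n' y y' : in_disk r0 m n y -> in_disk r0 m' n' y' ->
  sqrt ((fst y - fst y')^2 + (snd y - snd y')^2) < eta -> m = m' /\ n = n'.
Proof.
  intros H1 H2 H3. destruct (classic (m = m' /\ n = n')) as [E|E]; [exact E|exfalso].
  assert (HS := sep_S m n m' n' E).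
  assert (A : sqrt SS <= sqrt ((fst (latt m n) - fst (latt m' n'))^2 + (snd (latt m n) - snd (latt m' n'))^2))
    by (apply sqrt_le_1_alt; exact HS).
  unfold in_disk in H1, H2.
  assert (B1 := dist_sqrt_le _ _ _ H1). assert (B2 := dist_sqrt_le _ _ _ H2).
  assert (T1 := tri (fst (latt m n) - fst y) (snd (latt m n) - snd y) (fst y - fst (latt m' n')) (snd y - snd (latt m' n'))).
  assert (T2 := tri (fst y - fst y') (snd y - snd y') (fst y' - fst (latt m' n')) (snd y' - snd (latt m' n'))).
  replace (fst y - fst y' + (fst y' - fst (latt m' n'))) with (fst y - fst (latt m' n')) in T2 by ring.
  replace (snd y - snd y' + (snd y' - snd (latt m' n'))) with (snd y - snd (latt m' n')) in T2 by ring.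
  replace (fst (latt m n) - fst y + (fst y - fst (latt m' n'))) with (fst (latt m n) - fst (latt m' n')) in T1 by ring.
  replace (snd (latt m n) - snd y + (snd y - snd (latt m' n'))) with (snd (latt m n) - snd (latt m' n')) in T1 by ring.
  replace ((fst (latt m n) - fst y)^2 + (snd (latt m n) - snd y)^2) with ((fst y - fst (latt m n))^2 + (snd y - snd (latt m n))^2) in T1 by ring.
  unfold eta in H3. lra.
Qed.

Definition nv (v : R*R) := sqrt (fst v ^2 + snd v ^2).
Definition del0 v := eta / (nv v + 1).

Lemma del0_pos v : 0 < del0 v.
Proof. unfold del0. apply Rdiv_lt_0_compat. apply eta_pos. assert (0 <= nv v) by apply sqrt_pos. lra. Qed.

Lemma near p v m n m' n' t t' : 0 <= t < del0 v -> 0 <= t' < del0 v ->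
  in_disk r0 m n (pt p v t) -> in_disk r0 m' n' (pt p v t') -> m = m' /\ n = n'.
Proof.
  intros Ht Ht' H1 H2. apply (sep m n m' n' _ _ H1 H2).
  unfold pt; cbn [fst snd].
  assert (He := eta_pos).
  assert (Hn : 0 <= nv v) by apply sqrt_pos.
  assert (Hn2 : nv v * nv v = fst v ^2 + snd v ^2).
  { unfold nv. apply sqrt_sqrt. assert (0 <= fst v ^2) by apply pow2_ge_0. assert (0 <= snd v ^2) by apply pow2_ge_0. lra. }
  assert (E : (fst p + t * fst v - (fst p + t' * fst v)) ^ 2 + (snd p + t * snd v - (snd p + t' * snd v)) ^ 2
    = ((t - t') * nv v)^2).
  { transitivity ((t-t')^2*(fst v^2+snd v^2)); [ring|rewrite <- Hn2; ring]. }
  rewrite E.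
  assert (Hd : Rabs (t - t') * nv v < eta).
  { assert (Rabs (t - t') < del0 v) by (apply Rabs_def1; lra).
    unfold del0 in H.
    assert (Rabs (t-t') * (nv v + 1) < eta).
    { apply (Rmult_lt_compat_r (nv v + 1)) in H; [|lra]. unfold Rdiv in H. rewrite Rmult_assoc, Rinv_l in H by lra. lra. }
    assert (0 <= Rabs (t-t')) by apply Rabs_pos. nra. }
  rewrite <- Rsqr_pow2, sqrt_Rsqr_abs, Rabs_mult, (Rabs_pos_eq (nv v)) by exact Hn. exact Hd.
Qed.


Lemma geo (phi : R -> R*R -> R*R) G k p v : is_G r0 phi G ->
 (forall q q', Vk k (fst (phi 1 q') - fst (phi 1 q), snd (phi 1 q') - snd (phi 1 q)) <= Vk k (fst q' - fst q, snd q' - snd q)) ->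
 exists del, 0 < del /\
  ((forall t, 0 < t < del -> Vk k (fst (G (pt p v t)) - fst (G p), snd (G (pt p v t)) - snd (G p)) <= t^2 * Vk k v)
   \/ (forall t, 0 < t < del -> G (pt p v t) = Aeig (pt p v t))).
Proof.
  intros [HG1 HG2] Hode.
  assert (Hp0 : pt p v 0 = p) by (unfold pt; destruct p; simpl; f_equal; ring).
  assert (Hd0 := del0_pos v).
  destruct (classic (exists m n, in_disk r0 m n p)) as [[m [n Hp]]|Hno].
  - destruct (classic (exists t0, 0 < t0 /\ in_disk r0 m n (pt p v t0))) as [[t0 [Ht0 Hin]]|Hout].
    + exists t0. split; [lra|]. left. intros t Ht.
      assert (Hint : in_disk r0 m n (pt p v t)).
      { unfold in_disk, pt in *; cbn [fst snd] in *. apply (disk_convex r0 _ _ _ _ _ _ t0 t); auto; lra. }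
      assert (E1 := HG1 m n _ Hint). assert (E2 := HG1 m n _ Hp). cbv zeta in E1, E2.
      rewrite E1, E2. cbn [fst snd].
      eapply Rle_trans; [|eapply Rle_trans; [apply (Hode (fst p - fst (latt m n), snd p - snd (latt m n))
          (fst (pt p v t) - fst (latt m n), snd (pt p v t) - snd (latt m n)))|]].
      * apply Req_le. unfold Vk; cbn [fst snd]. ring.
      * apply Req_le. unfold Vk, pt; cbn [fst snd]. ring.
    + exists (del0 v). split; [exact Hd0|]. right. intros t Ht. apply HG2. intros m' n' Hin'.
      assert (Hp' : in_disk r0 m n (pt p v 0)) by (rewrite Hp0; exact Hp).
      destruct (near p v m n m' n' 0 t ltac:(lra) ltac:(lra) Hp' Hin') as [<- <-].
      apply Hout. exists t. split; [lra|exact Hin'].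
  - destruct (classic (exists t1 m1 n1, 0 < t1 < del0 v /\ in_disk r0 m1 n1 (pt p v t1)))
      as [[t1 [m1 [n1 [Ht1 Hin1]]]]|Hno2].
    + set (c1 := fst (latt m1 n1)). set (c2 := snd (latt m1 n1)).
      set (f0 := (fst p - c1)^2 + (snd p - c2)^2 - r0).
      assert (Hf0 : 0 < f0).
      { unfold f0. destruct (Rle_or_lt ((fst p - c1)^2 + (snd p - c2)^2) r0) as [H|H]; [|lra].
        exfalso. apply Hno. exists m1, n1. exact H. }
      set (be := (fst p - c1)*fst v + (snd p - c2)*snd v).
      assert (Hbe : 0 <= Rabs be) by apply Rabs_pos.
      exists (Rmin (del0 v) (f0/(2*Rabs be+1))). split.
      { apply Rmin_pos; [lra|apply Rdiv_lt_0_compat; lra]. }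
      right. intros t Ht. apply HG2. intros m' n' Hin'.
      assert (Hm1 : Rmin (del0 v) (f0/(2*Rabs be+1)) <= del0 v) by apply Rmin_l.
      assert (Hm2 : Rmin (del0 v) (f0/(2*Rabs be+1)) <= f0/(2*Rabs be+1)) by apply Rmin_r.
      destruct (near p v m1 n1 m' n' t1 t ltac:(lra) ltac:(lra) Hin1 Hin') as [<- <-].
      unfold in_disk, pt in Hin'; cbn [fst snd] in Hin'. fold c1 c2 in Hin'.
      assert (Ht2 : t * (2*Rabs be+1) < f0).
      { assert (t < f0/(2*Rabs be+1)) by lra.
        apply (Rmult_lt_compat_r (2*Rabs be+1)) in H; [|lra]. unfold Rdiv in H. rewrite Rmult_assoc, Rinv_l in H by lra. lra. }
      assert (-be <= Rabs be) by (rewrite <- Rabs_Ropp; apply Rle_abs).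
      assert (E : (fst p + t * fst v - c1) ^ 2 + (snd p + t * snd v - c2) ^ 2 = f0 + r0 + 2*t*be + t^2*(fst v^2 + snd v^2))
        by (unfold f0, be; ring).
      rewrite E in Hin'.
      assert (0 <= t^2*(fst v^2 + snd v^2)).
      { apply Rmult_le_pos. apply pow2_ge_0. assert (0 <= fst v^2) by apply pow2_ge_0. assert (0 <= snd v^2) by apply pow2_ge_0. lra. }
      nra.
    + exists (del0 v). split; [exact Hd0|]. right. intros t Ht. apply HG2. intros m' n' Hin'.
      apply Hno2. exists t, m', n'. split; [lra|exact Hin'].
Qed.

End Geo.

Lemma sq_lt_abs a b c : 0 <= c -> a^2 < c^2 * b^2 -> Rabs a < c * Rabs b.
Proof.
  intros Hc H. rewrite <- (pow2_abs a), <- (pow2_abs b) in H.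
  assert (0 <= Rabs a) by apply Rabs_pos. assert (0 <= Rabs b) by apply Rabs_pos.
  assert (0 <= c * Rabs b) by nra.
  destruct (Rlt_or_le (Rabs a) (c * Rabs b)) as [X|X]; [exact X|]. nra.
Qed.

Lemma abs_lt_sq a b c : 0 <= c -> Rabs a < c * Rabs b -> a^2 < c^2 * b^2.
Proof.
  intros Hc H. rewrite <- (pow2_abs a), <- (pow2_abs b).
  assert (0 <= Rabs a) by apply Rabs_pos. nra.
Qed.

Theorem lemma5p4 (alpha r0 : R) (psi : R -> R) (phi : R -> R * R -> R * R)
  (G : R * R -> R * R) :
  0 < alpha < 1 -> 0 < r0 < 1 ->
  (forall m1 n1 m2 n2 p, in_disk r0 m1 n1 p -> in_disk r0 m2 n2 p ->
     m1 = m2 /\ n1 = n2) ->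
  psi_ok alpha r0 psi -> is_flow psi phi -> is_G r0 phi G ->
  exists mu0, 0 < mu0 < 1 /\
    forall mu, mu0 < mu < 1 ->
    forall (p : R * R) (L : R * R -> R * R),
      filterdiff G (locally p) L ->
      (forall v, Kplus mu v -> Kplus mu (L v)) /\
      (forall w, Kminus mu (L w) -> Kminus mu w).
Proof.
  intros Ha Hr Hdis Hok Hflow HG.
  exists (1/2). split; [lra|]. intros mu Hmu p L HL.
  assert (KEY : forall k, 1/2 <= k <= 2 -> forall v, Vk k (L v) <= Vk k v).
  { intros k Hk v.
    assert (Hode : forall q q', Vk k (fst (phi 1 q') - fst (phi 1 q), snd (phi 1 q') - snd (phi 1 q)) <= Vk k (fst q' - fst q, snd q' - snd q))
      by (intros q q'; apply (ode alpha r0 psi phi k q q' Hr Hok Hflow Hk)).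
    assert (Hs : 0 <= Rabs (fst v) + Rabs (snd v)) by (assert (0 <= Rabs (fst v)) by apply Rabs_pos; assert (0 <= Rabs (snd v)) by apply Rabs_pos; lra).
    destruct (geo r0 Hr Hdis phi G k p v HG Hode) as [del [Hdel [Hleft|Hright]]].
    - unfold Vk at 1.
      apply (lim_V k (fst (L v)) (snd (L v)) (Vk k v) (Rabs (fst v) + Rabs (snd v))
        (fun t => fst (G (pt p v t)) - fst (G p)) (fun t => snd (G (pt p v t)) - snd (G p))).
      + intros eps Heps. destruct (diff_dir G L p v HL eps Heps) as [d [Hd H]].
        exists d. split; [exact Hd|]. intros t Ht. exact (H t Ht).
      + exact Hs.
      + exists del. split; [exact Hdel|]. intros t Ht. exact (Hleft t Ht).
    - assert (E1 : lam * fst v = fst (L v)).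
      { apply (lin_lim (lam * fst p - fst (G p)) (lam * fst v) (fst (L v)) (Rabs (fst v) + Rabs (snd v))
          (fun t => fst (G (pt p v t)) - fst (G p)) Hs).
        - intros eps Heps. destruct (diff_dir G L p v HL eps Heps) as [d [Hd H]].
          exists d. split; [exact Hd|]. intros t Ht. exact (proj1 (H t Ht)).
        - exists del. split; [exact Hdel|]. intros t Ht. rewrite (Hright t Ht). unfold Aeig, pt; cbn [fst snd]. ring. }
      assert (E2 : snd v / lam = snd (L v)).
      { apply (lin_lim (snd p / lam - snd (G p)) (snd v / lam) (snd (L v)) (Rabs (fst v) + Rabs (snd v))
          (fun t => snd (G (pt p v t)) - snd (G p)) Hs).
        - intros eps Heps. destruct (diff_dir G L p v HL eps Heps) as [d [Hd H]].
          exists d. split; [exact Hd|]. intros t Ht. exact (proj2 (H t Ht)).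
        - exists del. split; [exact Hdel|]. intros t Ht. rewrite (Hright t Ht). unfold Aeig, pt; cbn [fst snd].
          assert (H1 := lam_gt1). field. lra. }
      unfold Vk. rewrite <- E1, <- E2.
      assert (H1 := lam_gt1).
      assert (A : (snd v / lam)^2 <= snd v ^2).
      { replace ((snd v / lam)^2) with (snd v^2 / lam^2) by (field; lra).
        apply (Rmult_le_reg_r (lam^2)); [nra|]. unfold Rdiv. rewrite Rmult_assoc, Rinv_l by nra.
        assert (0 <= snd v^2) by apply pow2_ge_0. assert (1 <= lam^2) by nra. nra. }
      assert (B : fst v ^2 <= (lam * fst v)^2).
      { assert (0 <= fst v^2) by apply pow2_ge_0. replace ((lam * fst v)^2) with (lam^2 * fst v^2) by ring. assert (1 <= lam^2) by nra. nra. }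
      assert (0 <= k^2) by apply pow2_ge_0. nra. }
  split.
  - intros v Hv. unfold Kplus in *.
    assert (K := KEY mu ltac:(lra) v). unfold Vk in K.
    assert (Hv2 := abs_lt_sq (snd v) (fst v) mu ltac:(lra) Hv).
    apply sq_lt_abs; [lra|]. lra.
  - intros w Hw. unfold Kminus in *.
    assert (Hk1 : 1/2 <= 1/mu <= 2).
    { split.
      - apply Rmult_le_reg_r with mu; [lra|]. replace (1/mu*mu) with 1 by (field; lra). lra.
      - apply Rmult_le_reg_r with mu; [lra|]. replace (1/mu*mu) with 1 by (field; lra). lra. }
    assert (K := KEY (1/mu) Hk1 w).
    unfold Vk in K.
    assert (Hw2 := abs_lt_sq (fst (L w)) (snd (L w)) mu ltac:(lra) Hw).
    apply sq_lt_abs; [lra|].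
    assert (Hm2 : 0 < mu^2) by nra.
    replace ((1/mu)^2) with (1/mu^2) in K by (field; lra).
    assert (X : fst (L w) ^2 * (1/mu^2) < snd (L w)^2).
    { apply (Rmult_lt_reg_r (mu^2)); [lra|]. replace (fst (L w) ^ 2 * (1 / mu ^ 2) * mu ^ 2) with (fst (L w)^2) by (field; lra). lra. }
    assert (Y : fst w ^2 * (1/mu^2) < snd w^2) by lra.
    apply (Rmult_lt_compat_r (mu^2)) in Y; [|lra].
    replace (fst w ^ 2 * (1 / mu ^ 2) * mu ^ 2) with (fst w^2) in Y by (field; lra). lra.
Qed.
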